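(* Let $n\in\mathbb{N}$ with $n\ge2$, $S:=\{0,\dots,n-1\}$, and let $C\subseteq\operatorname{codes}(S)$ be a fundamental set. Let $\rho,\sigma\in(0,\infty)^S$ be such that $\alpha(x)|_\rho\le 2\pi\le\alpha(x)|_\sigma$ for all $x\in C$. Then \[ \frac{\sigma(n-2)}{\sigma(n-1)}\le\frac{\rho(n-2)}{\rho(n-1)}. \]
   Context: A coronal code over $S$ of length $m$ is a formal string $x=c:p_0p_1\dots p_{m-1}$ with $c,p_i\in S$; $\operatorname{center}(x)=c$, $\operatorname{petals}(x)=\{p_0,\dots,p_{m-1}\}$; codes are identified up to rotation/reversal of the petal string, giving $\operatorname{codes}(S)$. For $a,b,c\in S$ (indeterminates), $c^a_b:=\arccos\!\Big(\frac{(c+a)^2+(c+b)^2-(a+b)^2}{2(c+a)(c+b)}\Big)$, and $\alpha(x):=\sum_{i=0}^{m-1} c^{p_i}_{p_{i+1\bmod m}}$. For $\rho\in(0,\infty)^S$, $\alpha(x)|_\rho$ is the value obtained by substituting $\rho(s)$ for each symbol $s$. A nonempty $C\subseteq\operatorname{codes}(S)$ is fundamental if $\{\operatorname{center}(x):x\in C\}=\{0,\dots,n-2\}$ and for every nonempty $K\subseteq\{0,\dots,n-2\}$ there is $D\subseteq C$ with $\{\operatorname{center}(x):x\in D\}=K$ and $\big(\bigcup_{x\in D}\operatorname{petals}(x)\big)\setminus K\ne\emptyset$. *)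

(* Defs.v *)
From Stdlib Require Import Reals.
From mathcomp Require Import all_boot.
Set Implicit Arguments. Unset Strict Implicit. Unset Printing Implicit Defensive.

Open Scope R_scope.

(* A coronal code over S = {0,...,n-1} ('I_n): a center and a petal string
   p_0 ... p_{m-1}.  We work with representatives (c, s); every notion used
   below (center, petal set, alpha) is invariant under rotation/reversal of
   the petal string, so sets of codes can be given by sets of representatives. *)
Definition code (n : nat) : Type := ('I_n * seq 'I_n)%type.

Definition center {n} (x : code n) : 'I_n := x.1.
Definition petals {n} (x : code n) : seq 'I_n := x.2.

Definition angle (c a b : R) : R :=
  acos (((c + a)^2 + (c + b)^2 - (a + b)^2) / (2 * (c + a) * (c + b))).

(* alpha(x)|_rho = sum_{i<m} c^{p_i}_{p_{i+1 mod m}} with symbols s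
   replaced by rho(s); rho : nat -> R is read only on S = {0,..,n-1}. *)
Definition alpha_at {n} (rho : nat -> R) (x : code n) : R :=
  let s := petals x in
  foldr Rplus 0
    (map (fun pq : 'I_n * 'I_n =>
            angle (rho (val (center x))) (rho (val pq.1)) (rho (val pq.2)))
         (zip s (rot 1 s))).

Definition fundamental (n : nat) (C : code n -> Prop) : Prop :=
  (exists x, C x) /\
  (forall k : 'I_n, (exists x, C x /\ center x = k) <-> (val k <= n - 2)%nat) /\
  (forall K : 'I_n -> Prop,
     (exists k, K k) -> (forall k, K k -> (val k <= n - 2)%nat) ->
     exists D : code n -> Prop,
       (forall x, D x -> C x) /\
       (forall k, (exists x, D x /\ center x = k) <-> K k) /\
       (exists x p, D x /\ p \in petals x /\ ~ K p)).

(* Main.v *)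
Require Import Defs.
From Stdlib Require Import Reals Lra Lia.
From mathcomp Require Import all_boot zify.
Open Scope R_scope.

Lemma acos_lt x y : -1 <= x -> x < y -> y <= 1 -> acos y < acos x.
Proof.
intros h1 h2 h3.
destruct (acos_bound x) as [a1 a2]. destruct (acos_bound y) as [b1 b2].
destruct (Rlt_or_le (acos y) (acos x)) as [H|H]; auto.
exfalso.
assert (cos (acos x) >= cos (acos y)) .
{ destruct (Req_dec (acos x) (acos y)) as [E|E]. rewrite E; lra.
  apply Rgt_ge. apply cos_decreasing_1; lra. }
rewrite !cos_acos in H0; lra.
Qed.

Definition fr (c a b : R) := ((c + a)^2 + (c + b)^2 - (a + b)^2) / (2 * (c + a) * (c + b)).

Lemma fr_eq c a b : 0 < c -> 0 < a -> 0 < b -> fr c a b = 1 - 2 * (a/(c+a)) * (b/(c+b)).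
Proof. intros; unfold fr; field; lra. Qed.

Lemma ratio_bounds c a : 0 < c -> 0 < a -> 0 < a/(c+a) < 1.
Proof. intros; split. apply Rdiv_lt_0_compat; lra.
apply (Rmult_lt_reg_r (c+a)); [lra|]. unfold Rdiv; rewrite Rmult_assoc Rinv_l; lra. Qed.

Lemma ratio_le c a a' : 0 < c -> 0 < a -> a <= a' -> a/(c+a) <= a'/(c+a').
Proof. intros. assert (a'/(c+a') - a/(c+a) = c*(a'-a)/((c+a)*(c+a'))) by (field; lra).
assert (0 <= c*(a'-a)/((c+a)*(c+a'))). apply Rmult_le_pos. apply Rmult_le_pos; lra.
left; apply Rinv_0_lt_compat; apply Rmult_lt_0_compat; lra. lra. Qed.

Lemma ratio_lt c a a' : 0 < c -> 0 < a -> a < a' -> a/(c+a) < a'/(c+a').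
Proof. intros. assert (a'/(c+a') - a/(c+a) = c*(a'-a)/((c+a)*(c+a'))) by (field; lra).
assert (0 < c*(a'-a)/((c+a)*(c+a'))). apply Rmult_lt_0_compat. apply Rmult_lt_0_compat; lra.
apply Rinv_0_lt_compat; apply Rmult_lt_0_compat; lra. lra. Qed.

Lemma angle_le c a b a' b' : 0 < c -> 0 < a -> 0 < b -> a <= a' -> b <= b' ->
  angle c a b <= angle c a' b'.
Proof. intros Hc Ha Hb Ha' Hb'. unfold angle. fold (fr c a b). fold (fr c a' b').
rewrite !fr_eq; try lra.
pose proof (ratio_bounds c a Hc Ha) as B1. pose proof (ratio_bounds c b Hc Hb) as B2. pose proof (ratio_bounds c a' Hc ltac:(lra)) as B3. pose proof (ratio_bounds c b' Hc ltac:(lra)) as B4.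
pose proof (ratio_le c a a' Hc Ha Ha') as L1. pose proof (ratio_le c b b' Hc Hb Hb') as L2.
set (u := a/(c+a)) in *. set (v := b/(c+b)) in *. set (u' := a'/(c+a')) in *. set (v' := b'/(c+b')) in *.
assert (u*v <= u'*v') by nra.
destruct (Req_dec (u*v) (u'*v')) as [E|E].
- replace (1 - 2*u*v) with (1 - 2*u'*v') by nra. lra.
- left. assert (u'*v' < 1) by nra. apply acos_lt; nra.
Qed.

Lemma angle_lt c a b a' b' : 0 < c -> 0 < a -> 0 < b -> a < a' -> b <= b' ->
  angle c a b < angle c a' b'.
Proof. intros Hc Ha Hb Ha' Hb'. unfold angle. fold (fr c a b). fold (fr c a' b').
rewrite !fr_eq; try lra.
pose proof (ratio_bounds c a Hc Ha) as B1. pose proof (ratio_bounds c b Hc Hb) as B2. pose proof (ratio_bounds c a' Hc ltac:(lra)) as B3. pose proof (ratio_bounds c b' Hc ltac:(lra)) as B4.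
pose proof (ratio_lt c a a' Hc Ha Ha') as L1. pose proof (ratio_le c b b' Hc Hb Hb') as L2.
set (u := a/(c+a)) in *. set (v := b/(c+b)) in *. set (u' := a'/(c+a')) in *. set (v' := b'/(c+b')) in *.
assert (u*v < u'*v') by nra.
assert (u'*v' < 1) by nra. apply acos_lt; nra.
Qed.

Lemma angle_scale t c a b : 0 < t -> 0 < c -> 0 < a -> 0 < b -> angle (c/t) (a/t) (b/t) = angle c a b.
Proof. intros. unfold angle. f_equal. field. repeat split; lra. Qed.

Definition sumA n (c : R) (g : nat -> R) (l : seq ('I_n * 'I_n)) :=
  foldr Rplus 0 (map (fun pq : 'I_n * 'I_n => angle c (g (val pq.1)) (g (val pq.2))) l).

Arguments sumA {n}.

Lemma sum_le n (l : seq ('I_n*'I_n)) (c : R) (g h : nat -> R) :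
  0 < c -> (forall i, (i<n)%nat -> 0 < g i /\ g i <= h i) ->
  sumA c g l <= sumA c h l.
Proof.
intros Hc Hgh. elim: l => [|pq l IH] /=. unfold sumA; simpl; lra.
unfold sumA in *; simpl.
destruct (Hgh (val pq.1) (ltn_ord _)) as [P1 L1]. destruct (Hgh (val pq.2) (ltn_ord _)) as [P2 L2].
pose proof (angle_le c (g (val pq.1)) (g (val pq.2)) (h (val pq.1)) (h (val pq.2)) Hc P1 P2 L1 L2). apply Rplus_le_compat; [exact H | exact IH].
Qed.

Lemma sum_lt n (l : seq ('I_n*'I_n)) (c : R) (g h : nat -> R) :
  0 < c -> (forall i, (i<n)%nat -> 0 < g i /\ g i <= h i) ->
  (exists pq, pq \in l /\ g (val pq.1) < h (val pq.1)) ->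
  sumA c g l < sumA c h l.
Proof.
intros Hc Hgh [q [Hq Hlt]]. elim: l Hq => [|pq l IH] //= Hq.
unfold sumA in *; simpl.
destruct (Hgh (val pq.1) (ltn_ord _)) as [P1 L1]. destruct (Hgh (val pq.2) (ltn_ord _)) as [P2 L2].
rewrite in_cons in Hq. case/orP: Hq => [/eqP E | Hq].
- subst q. pose proof (angle_lt c (g (val pq.1)) (g (val pq.2)) (h (val pq.1)) (h (val pq.2)) Hc P1 P2 Hlt L2).
  pose proof (@sum_le n l c g h Hc Hgh) as HS. unfold sumA in HS. apply Rplus_lt_le_compat; [exact H | exact HS].
- pose proof (angle_le c (g (val pq.1)) (g (val pq.2)) (h (val pq.1)) (h (val pq.2)) Hc P1 P2 L1 L2).
  specialize (IH Hq). apply Rplus_le_lt_compat; [exact H | exact IH].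
Qed.

Lemma alpha_sumA n (r : nat -> R) (x : code n) :
  alpha_at r x = sumA (r (val (center x))) r (zip (petals x) (rot 1 (petals x))).
Proof. reflexivity. Qed.

Lemma sumA_scale n (l : seq ('I_n*'I_n)) c t (g : nat -> R) :
  0 < t -> 0 < c -> (forall i, (i<n)%nat -> 0 < g i) ->
  sumA (c / t) (fun i => g i / t) l = sumA c g l.
Proof.
intros Ht Hc Hg. unfold sumA. f_equal. apply: eq_map => pq /=.
apply angle_scale; auto; apply Hg; apply ltn_ord.
Qed.

Lemma petal_pair n (s : seq 'I_n) p : p \in s -> exists pq, pq \in zip s (rot 1 s) /\ pq.1 = p.
Proof.
intros Hp. have E : unzip1 (zip s (rot 1 s)) = s by apply unzip1_zip; rewrite size_rot.
rewrite -E in Hp. case/mapP: Hp => pq Hpq ->. by exists pq.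
Qed.

Lemma exists_max (f : nat -> R) n : (0 < n)%nat -> exists k, (k < n)%nat /\ forall j, (j < n)%nat -> f j <= f k.
Proof.
elim: n => [|n IH] // _.
destruct n as [|n].
- exists 0%nat; split => // j Hj. have -> : j = 0%nat by lia. lra.
- destruct (IH isT) as [k [Hk Hm]].
  destruct (Rle_or_lt (f (n.+1)) (f k)).
  + exists k; split; [lia|] => j Hj. case: (ltnP j n.+1) => Hj'. by apply Hm.
    have -> : j = n.+1 by lia. done.
  + exists n.+1; split; [lia|] => j Hj. case: (ltnP j n.+1) => Hj'. specialize (Hm j Hj'); lra.
    have -> : j = n.+1 by lia. lra.
Qed.

Theorem lemma5p1 (n : nat) (Hn : (2 <= n)%nat) (C : code n -> Prop)
  (rho sigma : nat -> R) :
  fundamental C ->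
  (forall i : nat, (i < n)%nat -> 0 < rho i) ->
  (forall i : nat, (i < n)%nat -> 0 < sigma i) ->
  (forall x, C x -> alpha_at rho x <= 2 * PI /\ 2 * PI <= alpha_at sigma x) ->
  sigma (n - 2)%nat / sigma (n - 1)%nat <= rho (n - 2)%nat / rho (n - 1)%nat.
Proof.
intros [_ [_ Hfund]] Hr Hs Halpha.
set (r := fun i => sigma i / rho i).
have Hn2 : ((n - 2) < n)%nat by lia.
have Hn1 : ((n - 1) < n)%nat by lia.
destruct (Rle_or_lt (r (n-2)%nat) (r (n-1)%nat)) as [Hle|Hlt].
{ unfold r in Hle.
  pose proof (Hr _ Hn2). pose proof (Hr _ Hn1). pose proof (Hs _ Hn2). pose proof (Hs _ Hn1).
  apply (Rmult_le_reg_r (rho (n-2)%nat)); auto.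
  apply (Rmult_le_reg_r (sigma (n-1)%nat)); auto.
  apply (Rmult_le_compat_r (rho (n-1)%nat)) in Hle; [|lra].
  apply (Rmult_le_compat_r (rho (n-2)%nat)) in Hle; [|lra].
  replace (sigma (n - 2)%nat / rho (n - 2)%nat * rho (n - 1)%nat * rho (n - 2)%nat)
    with (sigma (n - 2)%nat * rho (n - 1)%nat) in Hle by (field; lra).
  replace (sigma (n - 1)%nat / rho (n - 1)%nat * rho (n - 1)%nat * rho (n - 2)%nat)
    with (sigma (n - 1)%nat * rho (n - 2)%nat) in Hle by (field; lra).
  replace (sigma (n - 2)%nat / sigma (n - 1)%nat * rho (n - 2)%nat * sigma (n - 1)%nat)
    with (sigma (n - 2)%nat * rho (n - 2)%nat) by (field; lra).
  replace (rho (n - 2)%nat / rho (n - 1)%nat * rho (n - 2)%nat * sigma (n - 1)%nat)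
    with (rho (n - 2)%nat * (sigma (n - 1)%nat * rho (n - 2)%nat) / rho (n-1)%nat) by (field; lra).
  apply (Rmult_le_reg_r (rho (n-1)%nat)); auto.
  replace (rho (n - 2)%nat * (sigma (n - 1)%nat * rho (n - 2)%nat) / rho (n - 1)%nat * rho (n - 1)%nat)
    with (rho (n - 2)%nat * (sigma (n - 1)%nat * rho (n - 2)%nat)) by (field; lra).
  nra. }
exfalso.
have Hn0 : (0 < n)%nat by lia.
destruct (exists_max r n Hn0) as [k0 [Hk0 Hmax]].
set (t := r k0).
have Hrpos : forall i, (i < n)%nat -> 0 < r i.
{ intros i Hi. unfold r. apply Rdiv_lt_0_compat; auto. }
have Ht : 0 < t by apply Hrpos.
set (K := fun k : 'I_n => r (val k) = t).
have HKne : exists k, K k by exists (Ordinal Hk0).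
have HKb : forall k, K k -> (val k <= n - 2)%nat.
{ intros k Hk. unfold K in Hk.
  case: (ltnP (val k) (n-1)) => Hv; [lia|].
  have E : val k = (n-1)%nat. { move: Hv (ltn_ord k). simpl. lia. }
  rewrite E in Hk. pose proof (Hmax _ Hn2). fold t in H. lra. }
destruct (Hfund K HKne HKb) as [D [HDC [Hcent [x [p [Dx [Hp HnK]]]]]]].
have Kc : K (center x) by apply (proj1 (Hcent (center x))); exists x; split.
destruct (Halpha x (HDC x Dx)) as [A1 A2].
set (sg := fun i => sigma i / t).
have Hcx : (val (center x) < n)%nat by apply ltn_ord.
have E1 : alpha_at sigma x = alpha_at sg x.
{ rewrite !alpha_sumA. unfold sg. rewrite sumA_scale; auto. }
have Hc : sg (val (center x)) = rho (val (center x)).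
{ unfold sg. unfold K, r in Kc. pose proof (Hr _ Hcx). pose proof (Hs _ Hcx). rewrite <- Kc. field. split; apply Rgt_not_eq; assumption. }
have Hgh : forall i, (i < n)%nat -> 0 < sg i /\ sg i <= rho i.
{ intros i Hi. pose proof (Hmax i Hi). pose proof (Hr i Hi). pose proof (Hs i Hi).
  unfold sg; split. apply Rdiv_lt_0_compat; auto.
  fold t in H. unfold r in H.
  apply (Rmult_le_reg_r t); auto. replace (sigma i / t * t) with (sigma i) by (field; lra).
  apply (Rmult_le_compat_r (rho i)) in H; [|lra].
  replace (sigma i / rho i * rho i) with (sigma i) in H by (field; lra). lra. }
have Hlt2 : alpha_at sg x < alpha_at rho x.
{ rewrite !alpha_sumA. rewrite Hc. apply sum_lt.
  - apply Hr, Hcx.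
  - exact Hgh.
  - destruct (petal_pair n (petals x) p Hp) as [pq [Hpq E]]. exists pq; split; [exact Hpq|].
    rewrite E. have Hpn : (val p < n)%nat by apply ltn_ord.
    pose proof (Hmax _ Hpn). pose proof (Hr _ Hpn). pose proof (Hs _ Hpn).
    fold t in H. have Hne : r (val p) <> t by exact HnK.
    have Hl : r (val p) < t by lra.
    unfold r in Hl. unfold sg.
    apply (Rmult_lt_reg_r t); auto. replace (sigma (val p) / t * t) with (sigma (val p)) by (field; lra).
    apply (Rmult_lt_compat_r (rho (val p))) in Hl; [|lra].
    replace (sigma (val p) / rho (val p) * rho (val p)) with (sigma (val p)) in Hl by (field; lra). lra. }
rewrite E1 in A2. lra.
Qed.
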